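(* Let $q$ be a prime power and $n,k,\alpha$ positive integers with $k\mid n$, $\alpha\ge3$ and $n\ge\alpha k$. Then $$B_q(n,k,(\alpha-1)k;\alpha)\ge q^{\frac{n-\alpha k+1}{\alpha-1}}.$$
   Context: For a prime power $q$, $\mathcal{G}_q(n,k)$ denotes the set of all $k$-dimensional subspaces of $\mathbb{F}_q^n$. An $\alpha$-$(n,k,\delta)_q^c$ covering Grassmannian code is a subset $\mathcal{C}\subseteq\mathcal{G}_q(n,k)$ (no repeated codewords) such that every set of $\alpha$ distinct codewords of $\mathcal{C}$ spans a subspace of $\mathbb{F}_q^n$ of dimension at least $k+\delta$. $B_q(n,k,\delta;\alpha)$ denotes the maximum size of an $\alpha$-$(n,k,\delta)_q^c$ code. *)

(* Defs.v *)
From HB Require Import structures.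
From mathcomp Require Import all_boot all_order all_algebra all_field.
From Stdlib Require Import Reals.
Set Implicit Arguments. Unset Strict Implicit. Unset Printing Implicit Defensive.
Import GRing.Theory.

(* F^n is modelled as the row vectors 'rV[F]_n; G_q(n,k) as the subspaces
   U : {vspace 'rV[F]_n} with \dim U = k. *)
Definition covering_code (F : fieldType) (n k delta alpha : nat)
    (C : seq {vspace 'rV[F]_n}) : Prop :=
  [/\ uniq C,
      (forall U, U \in C -> \dim U = k) &
      (forall S : seq {vspace 'rV[F]_n}, uniq S -> size S = alpha ->
         {subset S <= C} -> k + delta <= \dim (\sum_(U <- S) U)%VS)].

(* B_q(n,k,delta;alpha) >= x  :<->  some covering code has size >= x. *)
Definition B_ge (F : finFieldType) (n k delta alpha : nat) (x : R) : Prop :=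
  exists C : seq {vspace 'rV[F]_n},
    @covering_code F n k delta alpha C /\ (x <= INR (size C))%R.

(* Main.v *)
Require Import Defs.
From HB Require Import structures.
From mathcomp Require Import all_boot all_order all_algebra all_field.
From mathcomp Require Import zify.

Module Helpers.
Set Implicit Arguments. Unset Strict Implicit. Unset Printing Implicit Defensive.
Import GRing.Theory.
Lemma final_arith q k a n Cb E : 1 < q -> 0 < k -> a.+1 * k <= n -> 2 * Cb <= E ->
  (q - 1) * q ^ n <= Cb * (q ^ k - 1) * q ^ (a * k) -> q ^ (n - a.+1 * k + 1) <= E.
Proof.
move=> q1 k0 hn hC H.
have En : n = (n - a.+1 * k) + a * k + k by rewrite -addnA -mulSnr subnK.
move: H; rewrite [in X in X -> _]En !expnD expn1.
set Q := q ^ (n - a.+1 * k); set Y := q ^ (a * k); set X := q ^ k.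
have Y0 : 0 < Y by rewrite expn_gt0 ltnW.
have X0 : 0 < X by rewrite expn_gt0 ltnW.
have Q0 : 0 < Q by rewrite expn_gt0 ltnW.
move=> H.
have H2 : (q - 1) * Q * X <= Cb * (X - 1).
  by rewrite -(leq_pmul2r Y0); move: H; rewrite -!mulnA [Y * X]mulnC.
clear H; move: H2 hC q1 X0 Q0; clearbody Q X Y => H2 hC q1' X0 Q0.
rewrite leqNgt; apply/negP => lt.
have h3 : 2 * Cb <= Q * q - 1.
  have Qq0 : 0 < Q * q by rewrite muln_gt0 Q0 ltnW.
  rewrite subn1 -(leq_add2r 1) !addn1 prednK //; exact: leq_ltn_trans hC lt.
have h4 := leq_mul h3 (leqnn (X - 1)).
have h5 : 2 * ((q - 1) * Q * X) <= (Q * q - 1) * (X - 1).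
  apply: leq_trans h4; rewrite -[2 * Cb * _]mulnA leq_mul2l; apply/orP; right; exact: H2.
have a1 : (Q * q - 1) * (X - 1) < Q * q * X.
  apply: leq_ltn_trans (leq_mul (leq_subr 1 _) (leqnn _)) _.
  by rewrite ltn_pmul2l ?muln_gt0 ?Q0 ?(ltnW q1') // subn1 ltn_predL.
have a2 : Q * q * X <= 2 * ((q - 1) * Q * X).
  have -> : 2 * ((q - 1) * Q * X) = (2 * (q - 1)) * (Q * X) by rewrite !mulnA.
  have -> : Q * q * X = q * (Q * X) by rewrite mulnA [q * Q]mulnC.
  by rewrite leq_mul2r; apply/orP; right; clear -q1'; lia.
by have := leq_ltn_trans (leq_trans a2 h5) a1; rewrite ltnn.
Qed.

Lemma bin_lb T b : T.+1 <= 'C(T + b.+1, b.+1).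
Proof.
elim: b => [|b IH]; first by rewrite addn1 bin1.
by rewrite addnS binS; apply: leq_trans IH (leq_addl _ _).
Qed.


Lemma ffact_le_exp n m : n ^_ m <= n ^ m.
Proof.
elim: m n => [|m IH] n; first by rewrite ffactn0.
rewrite ffactnS expnS leq_mul2l; apply/orP; right.
apply: leq_trans (IH _) _.
case: m {IH} => [|m]; first by rewrite !expn0.
by rewrite leq_exp2r // leq_pred.
Qed.

Lemma binom_bound N a : 1 < a -> 2 * 'C(N, a) <= N ^ a.
Proof.
move=> a1; apply: leq_trans (ffact_le_exp N a).
rewrite -bin_ffact [2 * _]mulnC leq_mul2l; apply/orP; right.
case: a a1 => [|[|a]] // _; rewrite factS.
by apply: (leq_mul (_ : 2 <= a.+2) (fact_gt0 _)).
Qed.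

Local Open Scope ring_scope.

Lemma card_setnat (T : finType) (P : pred T) : #|[set x | P x]| = (\sum_x (P x : nat))%N.
Proof. rewrite -sum1_card big_mkcond; apply: eq_bigr => x _; rewrite inE; by case: (P x). Qed.

Section Count.
Variables (F : finFieldType) (n k : nat).
Local Notation q := #|F|.

Lemma nz_coord (c : 'rV[F]_k) : c != 0 -> exists j, c 0 j != 0.
Proof.
move=> cn; apply/existsP; apply: contraR cn; rewrite negb_exists => /forallP H.
by apply/eqP/rowP => j; rewrite mxE; move: (H j); rewrite negbK => /eqP.
Qed.

Lemma fib_le (c : 'rV[F]_k) (w w' : 'rV[F]_n) : c != 0 ->
  (#|[set M : 'M[F]_(k, n) | c *m M == w]| <= #|[set M : 'M[F]_(k, n) | c *m M == w']|)%N.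
Proof.
move=> /nz_coord [j cj].
pose D : 'M[F]_(k, n) := (c 0 j)^-1 *: (delta_mx j 0 *m (w' - w)).
have cD : c *m D = w' - w.
  rewrite /D -scalemxAr mulmxA -colE (mx11_scalar (col j c)) !mxE mul_scalar_mx.
  by rewrite scalerA mulVf // scale1r.
rewrite -(card_imset _ (addIr D)); apply: subset_leq_card; apply/subsetP => _ /imsetP [M HM ->].
by rewrite inE mulmxDr; move: HM; rewrite inE => /eqP ->; rewrite cD addrC subrK.
Qed.

Lemma count_cW (c : 'rV[F]_k) (W : {vspace 'rV[F]_n}) : c != 0 ->
 (#|[set M : 'M[F]_(k,n) | c *m M \in W]| * q ^ n = #|W| * q ^ (k * n))%N.
Proof.
move=> cn.
pose fib w := #|[set M : 'M[F]_(k, n) | c *m M == w]|.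
have fibE w : fib w = fib 0.
  by apply/eqP; rewrite eqn_leq !fib_le.
pose f0 := fib 0.
have tot : (q ^ (k * n) = q ^ n * f0)%N.
  have -> : (q ^ (k * n) = #|{: 'M[F]_(k, n)}|)%N by rewrite card_mx.
  have -> : (q ^ n * f0 = \sum_(w : 'rV[F]_n) fib w)%N.
    rewrite (eq_bigr (fun _ => f0)) ?sum_nat_const ?card_mx ?mul1n //.
  rewrite /fib (eq_bigr (fun w => \sum_M ((c *m M == w) : nat))%N); last by move=> w _; rewrite card_setnat.
  rewrite exchange_big /= -sum1_card; apply: eq_bigr => M _.
  rewrite -card_setnat (_ : [set w | c *m M == w] = [set c *m M]) ?cards1 //.
  by apply/setP => w; rewrite !inE eq_sym.
have part : (#|[set M : 'M[F]_(k,n) | c *m M \in W]| = \sum_(w in W) fib w)%N.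
  rewrite card_setnat /fib (eq_bigr (fun w => \sum_M ((c *m M == w) : nat))%N); last by move=> w _; rewrite card_setnat.
  rewrite exchange_big /=; apply: eq_bigr => M _.
  rewrite -big_mkcondr /=.
  case: (boolP (c *m M \in W)) => HW.
    by rewrite (big_pred1 (c *m M)) // => w /=; apply/andP/eqP => [[_ /eqP ->]|->] //.
  by rewrite big_pred0 // => w; apply/andP => [[Hw /eqP Ew]]; move: HW; rewrite Ew Hw.
rewrite part (eq_bigr (fun _ => f0)); last by move=> w _; exact: fibE.
by rewrite sum_nat_const tot [(_ ^ n * f0)%N]mulnC mulnA.
Qed.
End Count.

Lemma superset (T : finType) (A : {set T}) j :
  (#|A| <= j)%N -> (j <= #|T|)%N -> exists2 B : {set T}, A \subset B & #|B| = j.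
Proof.
elim: j A => [|j IH] A hA hj.
  by exists A => //; apply/eqP; rewrite -leqn0.
case: (ltngtP #|A| j.+1) => [lt|gt|eq]; last by exists A.
- have [B AB cB] := IH A lt (ltnW hj).
  have : (0 < #|~: B|)%N by rewrite cardsCs setCK cB subn_gt0.
  rewrite card_gt0 => /set0Pn [x]; rewrite inE => xB.
  exists (x |: B); first by apply: (subset_trans AB); apply: subsetUr.
  by rewrite cardsU1 xB cB.
- by move: hA; rewrite leqNgt gt.
Qed.

Definition strong (F : fieldType) (n k a : nat) (C : seq {vspace 'rV[F]_n}) : Prop :=
  [/\ uniq C, (forall U, U \in C -> \dim U = k) &
      (forall S : seq {vspace 'rV[F]_n}, uniq S -> (size S <= a.+1)%N ->
         {subset S <= C} -> (k * size S <= \dim (\sum_(U <- S) U))%N)].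

Section Ext.
Variables (F : finFieldType) (n k a : nat).
Hypotheses (kpos : (0 < k)%N) (apos : (0 < a)%N) (hn : (a.+1 * k <= n)%N).
Local Notation q := #|F|.

Lemma extend (C : seq {vspace 'rV[F]_n}) : strong k a C ->
  ('C(size C, a) * (q ^ k - 1) * q ^ (a * k) < (q - 1) * q ^ n)%N ->
  exists U, strong k a (U :: C).
Proof.
case=> uC dC oC hyp.
set N := size C.
set m := minn a N.
pose Ws (s : {set 'I_N}) := (\sum_(i in s) nth 0%VS C i)%VS.
have dimW s : (\dim (Ws s) <= #|s| * k)%N.
  apply: leq_trans (dimv_leq_sum _ _ _) _.
  rewrite (eq_bigr (fun _ => k)) => [|i _]; last by rewrite dC // mem_nth.
  by rewrite sum_nat_const.
pose P (p : {set 'I_N} * 'rV[F]_k) (M : 'M[F]_(k,n)) :=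
  [&& #|p.1| == m, p.2 != 0 & p.2 *m M \in Ws p.1].
have q1 : (1 < q)%N := finNzRing_gt1 _.
have key : ('C(N, m) * (q ^ k - 1) * q ^ (a * k) < (q - 1) * q ^ n)%N.
  case: (leqP a N) => aN.
    by have -> : m = a by apply/minn_idPl.
  have -> : m = N by apply/minn_idPr; apply: ltnW.
  rewrite binn mul1n.
  have X1 : (0 < q ^ k)%N by rewrite expn_gt0 ltnW.
  have Y1 : (0 < q ^ (a * k))%N by rewrite expn_gt0 ltnW.
  have Z : (q ^ (a * k) * q ^ k <= q ^ n)%N.
    by rewrite -expnD leq_exp2l // addnC -mulSn.
  move: X1 Y1 Z q1; set X := (q ^ k)%N; set Y := (q ^ (a * k))%N; set Zn := (q ^ n)%N => X1 Y1 Z q1'.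
  nia.
have exM : [exists M, [forall p, ~~ P p M]].
  apply: contraT; rewrite negb_exists => /forallP allbad.
  have lb : (q ^ (k * n) * (q - 1) <= \sum_M \sum_p (P p M : nat))%N.
    have -> : (q ^ (k * n) = #|{: 'M[F]_(k, n)}|)%N by rewrite card_mx.
    rewrite -sum_nat_const; apply: leq_sum => M _.
    move: (allbad M); rewrite negb_forall => /existsP [[s c]]; rewrite negbK => /and3P [/= sm cn cW].
    rewrite -card_setnat.
    have sub : [set (s, l *: c) | l in [set~ (0:F)]] \subset [set p | P p M].
      apply/subsetP => x /imsetP [l l0 ->]; rewrite !inE in l0 *.
      by rewrite /P /= sm scaler_eq0 negb_or l0 cn -scalemxAl memvZ.
    apply: leq_trans (subset_leq_card sub).
    rewrite card_imset ?cardsC1 ?subn1 //.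
    move=> l1 l2 [] /eqP; rewrite -subr_eq0 -scalerBl scaler_eq0 (negbTE cn) orbF subr_eq0.
    by move/eqP.
  have ub : ((\sum_M \sum_p (P p M : nat)) * q ^ n <=
             'C(N, m) * (q ^ k - 1) * q ^ (a * k) * q ^ (k * n))%N.
    have -> : ('C(N, m) * (q ^ k - 1) = \sum_(p : {set 'I_N} * 'rV[F]_k) ((#|p.1| == m) && (p.2 != 0%R) : nat))%N.
      rewrite -card_setnat.
      have -> : [set p : {set 'I_N} * 'rV[F]_k | (#|p.1| == m) && (p.2 != 0%R)] =
                setX [set s : {set 'I_N} | #|s| == m] [set~ (0 : 'rV[F]_k)].
        by apply/setP => [[s c]]; rewrite !inE.
      by rewrite cardsX card_draws card_ord cardsC1 card_mx mul1n subn1.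
    rewrite exchange_big big_distrl /= -mulnA big_distrl /=.
    apply: leq_sum => [[s c]] _ /=.
    rewrite -card_setnat.
    case: (boolP ((#|s| == m) && (c != 0))) => [/andP [sm cn]|H]; last first.
      rewrite mul0n (_ : [set M | P (s, c) M] = set0) ?cards0 //.
      apply/setP => M; rewrite !inE /P /=; apply/negP => /and3P [x y _].
      by move: H; rewrite x y.
    rewrite (_ : [set M | P (s, c) M] = [set M : 'M[F]_(k, n) | c *m M \in Ws s]); last first.
      by apply/setP => M; rewrite !inE /P /= sm cn.
    rewrite count_cW // mul1n leq_mul2r; apply/orP; right.
    rewrite card_vspace leq_exp2l //.
    apply: leq_trans (dimW s) _; rewrite (eqP sm) leq_mul2r geq_minl orbT //.
  have H := leq_trans (leq_mul lb (leqnn (q ^ n))) ub.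
  have A1 : (0 < q ^ (k * n))%N by rewrite expn_gt0 ltnW.
  move: H A1 key; set A := (q ^ (k * n))%N; set B := ('C(N, m) * (q ^ k - 1) * q ^ (a * k))%N.
  set Z := (q ^ n)%N; move=> H A1 key'.
  nia.
case/existsP: exM => M /forallP good.
have goodP (s : {set 'I_N}) (c : 'rV[F]_k) : #|s| = m -> c != 0 -> c *m M \notin Ws s.
  by move=> sm cn; move: (good (s, c)); rewrite /P /= sm eqxx cn.
pose U := (\sum_(i < k) <[row i M]>)%VS.
have memU u : u \in U -> exists c : 'rV[F]_k, u = c *m M.
  case/memv_sumP => vs Hvs ->.
  have /fin_all_exists [l Hl] : forall i, exists l : F, vs i = l *: row i M.
    by move=> i; apply/vlineP; exact: Hvs.
  exists (\row_i l i); rewrite mulmx_sum_row; apply: eq_bigr => i _.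
  by rewrite mxE Hl.
have inU c : c *m M \in U.
  rewrite mulmx_sum_row; apply: memv_sumr => i _.
  by rewrite memvZ // memv_line.
have [s0 _ cs0] : exists2 s0 : {set 'I_N}, set0 \subset s0 & #|s0| = m.
  by apply: superset; rewrite ?cards0 // card_ord geq_minr.
have inj (c : 'rV[F]_k) : c *m M = 0 -> c = 0.
  move=> H; apply/eqP; apply: contraT => cn.
  by move: (goodP s0 c cs0 cn); rewrite H mem0v.
have injM : injective (fun c : 'rV[F]_k => c *m M).
  move=> c d /= /eqP; rewrite -subr_eq0 -mulmxBl => /eqP /inj /eqP.
  by rewrite subr_eq0 => /eqP.
have dimU : \dim U = k.
  apply/eqP; rewrite eqn_leq; apply/andP; split.
    apply: leq_trans (dimv_leq_sum _ _ _) _.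
    rewrite -[X in (_ <= X)%N]card_ord -sum1_card; apply: leq_sum => i _.
    by rewrite dim_vline; case: (_ != 0).
  rewrite -(leq_exp2l _ _ q1) -card_vspace.
  have -> : (q ^ k = #|[set c *m M | c : 'rV[F]_k]|)%N.
    by rewrite card_imset // card_mx mul1n.
  apply: subset_leq_card; apply/subsetP => x /imsetP [c _ ->]; exact: inU.
have Udisj (s : {set 'I_N}) u : #|s| = m -> u \in U -> u \in Ws s -> u = 0.
  move=> sm /memU [c ->] uW; case: (eqVneq c 0) => [->|cn]; first by rewrite mul0mx.
  by move: (goodP s c sm cn); rewrite uW.
have sub_sup (S' : seq {vspace 'rV[F]_n}) : uniq S' -> (size S' <= a)%N -> {subset S' <= C} ->
    exists2 s : {set 'I_N}, #|s| = m & ((\sum_(V <- S') V)%VS <= Ws s)%VS.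
  move=> uS sS SC.
  pose s0' := [set i : 'I_N | nth 0%VS C i \in S'].
  have cs : (#|s0'| <= m)%N.
    rewrite leq_min; apply/andP; split; last by rewrite -[X in (_ <= X)%N]card_ord max_card.
    have -> : #|s0'| = count (mem S') C.
      rewrite -sum1_card (eq_bigl (fun i : 'I_N => nth 0%VS C i \in S')); last by move=> i; rewrite inE.
      by rewrite -sum1_count (big_nth 0%VS) big_mkord.
    rewrite -size_filter; apply: leq_trans sS; apply: uniq_leq_size; first exact: filter_uniq.
    by move=> x; rewrite mem_filter => /andP [].
  have mN : (m <= #|'I_N|)%N by rewrite card_ord geq_minr.
  have [s s0s cs'] := superset cs mN.
  exists s => //; rewrite big_seq; apply: (big_ind (fun X => (X <= Ws s)%VS)) => [|X Y HX HY|V VS]; first exact: sub0v.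
    by rewrite subv_add HX HY.
  have VC := SC V VS.
  have iN : (index V C < N)%N by rewrite index_mem.
  apply: (@sumv_sup _ _ _ (Ordinal iN)).
    by apply: (subsetP s0s); rewrite inE /= nth_index.
  by rewrite /= nth_index.
have UC : U \notin C.
  apply/negP => UC.
  have pn : vpick U != 0 by rewrite vpick0 -dimv_eq0 dimU -lt0n.
  have sub1 : {subset [:: U] <= C} by move=> V; rewrite inE => /eqP ->.
  have [s sm Hs] := sub_sup [:: U] isT apos sub1.
  apply/negP: pn; apply/negPn/eqP; apply: (Udisj s) => //; first exact: memv_pick.
  by apply: (subvP Hs); rewrite big_seq1; exact: memv_pick.
exists U; split.
- by rewrite /= UC uC.
- by move=> V; rewrite inE => /orP [/eqP ->|]; [exact: dimU | exact: dC].
move=> S uS sS SUC.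
case: (boolP (U \in S)) => US; last first.
  apply: oC => // V VS; move: (SUC V VS); rewrite inE => /orP [/eqP E|//].
  by move: US; rewrite -E VS.
have pS := perm_to_rem US.
set S' := rem U S in pS.
have uS' : uniq S' := rem_uniq U uS.
have US' : U \notin S' by rewrite mem_rem_uniqF.
have sS' : size S = (size S').+1 by rewrite (perm_size pS).
have S'C : {subset S' <= C}.
  move=> V VS'; have VS := mem_rem VS'.
  move: (SUC V VS); rewrite inE => /orP [/eqP E|//].
  by move: US'; rewrite -E VS'.
have sizeS' : (size S' <= a)%N by rewrite -ltnS -sS'.
have [s sm Hs] := sub_sup S' uS' sizeS' S'C.
rewrite (perm_big _ pS) big_cons /= dimv_disjoint_sum.
  by rewrite dimU sS' mulnS leq_add2l; apply: oC => //; apply: leqW.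
apply/eqP; rewrite -subv0; apply/subvP => u /memv_capP [uU uS2]; rewrite memv0; apply/eqP.
by apply: (Udisj s) => //; exact: (subvP Hs).
Qed.
End Ext.

Close Scope ring_scope.
End Helpers.
Import Helpers.
From Stdlib Require Import Reals.

Lemma INR_expn m e : INR (expn m e) = (INR m ^ e)%R.
Proof. elim: e => [|e IH]; first by rewrite expn0. by rewrite expnS (mult_INR m (expn m e)) IH. Qed.

Theorem mainTheorem14 (F : finFieldType) (n k alpha : nat) :
  0 < n -> 0 < k -> 0 < alpha -> k %| n -> 3 <= alpha -> alpha * k <= n ->
  B_ge F n k ((alpha - 1) * k) alpha
    (Rpower (INR #|F|) (INR (n - alpha * k + 1) / INR (alpha - 1))).
Proof.
move=> n0 k0; case: alpha => [//|a] _ _ al3 akn.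
rewrite subSS subn0.
have a1 : 1 < a := al3.
have apos : 0 < a := ltnW a1.
have q1 : 1 < #|F| := finNzRing_gt1 _.
pose cond N := 'C(N, a) * (expn #|F| k - 1) * expn #|F| (a * k) < (#|F| - 1) * expn #|F| n.
have ex : exists N, ~~ cond N.
  exists ((#|F| - 1) * expn #|F| n + a); rewrite /cond -leqNgt.
  case: a apos {al3 akn a1 cond} => [//|b] _.
  apply: leq_trans (ltnW (bin_lb _ b)) _.
  rewrite -mulnA; apply: leq_pmulr.
  by rewrite muln_gt0 expn_gt0 (ltnW q1) subn_gt0 andbT; apply: (leq_trans q1); rewrite -[X in (X <= _)]expn1 leq_exp2l.
case: (ex_minnP ex) => Ns HNs minN.
have condlt N : N < Ns -> cond N.
  move=> lt; apply: (contraTT _ lt) => H; rewrite -leqNgt; exact: minN.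
have build N : N <= Ns -> exists C, @strong F n k a C /\ size C = N.
  elim: N => [_|N IH lt].
    exists [::]; split => //; split => // S _ _ SC.
    case: S SC => [|x S'] SC; first by rewrite muln0.
    by have := SC x (mem_head _ _).
  have [C [sC eC]] := IH (ltnW lt).
  have [U sU] := extend k0 apos akn sC (ltac:(rewrite eC; exact: condlt)).
  by exists (U :: C); rewrite /= eC.
have [C [[uC dC oC] eC]] := build Ns (leqnn _).
exists C; split.
  split => // S uS sS SC.
  have := oC S uS (eq_leq sS) SC; rewrite sS.
  by rewrite mulnS mulnC.
rewrite eC.
have HN : expn #|F| (n - a.+1 * k + 1) <= expn Ns a.
  by apply: final_arith q1 k0 akn (binom_bound Ns a1) _; rewrite leqNgt.
have Ns0 : 0 < Ns.
  case: Ns HNs {minN condlt build C uC dC oC eC HN} => [|//]; rewrite /cond bin0n eqn0Ngt apos /= !mul0n.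
  by rewrite muln_gt0 expn_gt0 (ltnW q1) subn_gt0 q1.
set x := (n - a.+1 * k + 1).
have qR : (0 < INR #|F|)%R by apply: lt_0_INR; apply/ltP; apply: ltnW.
have aR : (0 < INR a)%R by apply: lt_0_INR; apply/ltP.
have NR : (0 < INR Ns)%R by apply: lt_0_INR; apply/ltP.
have Hr : (INR #|F| ^ x <= INR Ns ^ a)%R.
  by rewrite -!INR_expn; apply: le_INR; apply/leP.
rewrite /Rdiv -Rpower_mult Rpower_pow //.
apply: Rle_trans (Rle_Rpower_l _ _ _ (Rlt_le _ _ (Rinv_0_lt_compat _ aR)) (conj (pow_lt _ _ qR) Hr)) _.
rewrite -Rpower_pow // Rpower_mult Rinv_r ?Rpower_1 //; first by apply: Rle_refl.
by apply: not_0_INR => a0; move: apos; rewrite a0.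
Qed.
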